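(* Let $X$ be a compact metrizable space, $\Delta$ a weak*-closed set of Borel probability measures on $X$, and $\varepsilon>0$. Let $f,g\colon X\to\mathbb R$ be continuous with $\|f-g\|_{2,\Delta}^2<\varepsilon^3/8$ and $\mu(g^{-1}(0))<\varepsilon/2$ for all $\mu\in\Delta$. Then there is a continuous $g'\colon X\to\mathbb R$ such that $\|f-g'\|_\infty<\varepsilon$ and $\mu((g')^{-1}(0))<\varepsilon$ for all $\mu\in\Delta$.
   Context: $\|h\|_{2,\Delta}=\sup\{(\int|h|^2d\mu)^{1/2}:\mu\in\Delta\}$ for $h\in\mathrm{C}(X)$. *)

(* Defs.v *)
From HB Require Import structures.
From mathcomp Require Import all_boot all_order all_algebra.
From mathcomp Require Import all_classical all_reals all_analysis.
Set Implicit Arguments. Unset Strict Implicit. Unset Printing Implicit Defensive.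
Import Order.TTheory GRing.Theory Num.Theory.
Import numFieldNormedType.Exports.
Local Open Scope classical_set_scope.
Local Open Scope ring_scope.

Definition borel_space (R : realType) (X : pseudoPMetricType R) :=
  g_sigma_algebraType (@open X).

Definition pint (R : realType) (X : pseudoPMetricType R)
  (mu : probability (borel_space X) R) (h : X -> R) : R :=
  Rintegral mu setT h.

(* A set of Borel probability measures is weak*-closed: its complement is
   open in the weak* topology, whose basic open neighbourhoods of mu are
   { nu | |int h_i dnu - int h_i dmu| < e, i < n } for finitely many
   continuous h_i and e > 0. *)
Definition weak_star_closed (R : realType) (X : pseudoPMetricType R)
  (Delta : set (probability (borel_space X) R)) : Prop :=
  forall mu, ~ Delta mu ->
    exists (n : nat) (hs : 'I_n -> X -> R) (e : R),
      0 < e /\ (forall i, continuous (hs i)) /\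
      forall nu : probability (borel_space X) R,
        (forall i, `| pint nu (hs i) - pint mu (hs i) | < e) -> ~ Delta nu.

Definition norm2Delta_sq (R : realType) (X : pseudoPMetricType R)
  (Delta : set (probability (borel_space X) R)) (h : X -> R) : \bar R :=
  ereal_sup [set (\int[mu]_x ((`|h x| ^+ 2)%:E))%E | mu in Delta].

Definition supnorm (R : realType) (X : pseudoPMetricType R) (h : X -> R) : \bar R :=
  ereal_sup (range (fun x => (`|h x|)%:E)).

(* Main.v *)
Require Import Defs.
From HB Require Import structures.
From mathcomp Require Import all_boot all_order all_algebra.
From mathcomp Require Import all_classical all_reals all_analysis.
From mathcomp Require Import measurable_realfun ring lra.
Import Order.TTheory GRing.Theory Num.Theory.
Import numFieldNormedType.Exports.
Local Open Scope classical_set_scope.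
Local Open Scope ring_scope.

Lemma cont_mfun {R : realType} {X : pseudoPMetricType R} {h : X -> R} :
  continuous h -> measurable_fun (setT : set (borel_space X)) h.
Proof.
move=> /continuousP ch.
apply: (measurability _ (measurable_realfun.RGenOpens.measurableE R)).
move=> _ [_ [a [b ->]] <-].
rewrite setTI; apply: sub_sigma_algebra.
exact/ch/interval_open.
Qed.

Definition clip {R : realType} (c t : R) := Num.max (-c) (Num.min t c).

Lemma clip_id (R : realType) (c t : R) : `|t| <= c -> clip c t = t.
Proof.
move=> h; rewrite /clip minEle maxEle.
have := h; rewrite ler_norml => /andP[h1 h2].
by rewrite h2 h1.
Qed.

Lemma clip_le (R : realType) (c t : R) : 0 <= c -> `|clip c t| <= c.
Proof.
move=> c0; rewrite /clip minEle maxEle; case: (leP t c) => h1.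
  case: (leP (-c) t) => h2; rewrite ler_norml; apply/andP; split; lra.
case: (leP (-c) c) => h2; rewrite ler_norml; apply/andP; split; lra.
Qed.

Lemma clip_cont (R : realType) (c : R) : continuous (clip c).
Proof.
move=> t.
apply: (@continuous_max R R (fun _ => - c) (fun t => Num.min t c)).
  exact: cst_continuous.
apply: (@continuous_min R R id (fun _ => c)).
  by move=> ?; exact: cvg_id.
exact: cst_continuous.
Qed.

Theorem lemma2p8 (R : realType) (X : pseudoPMetricType R)
  (hX : hausdorff_space X) (cX : compact [set: X])
  (Delta : set (probability (borel_space X) R))
  (hDelta : weak_star_closed Delta)
  (eps : R) (heps : 0 < eps) (f g : X -> R)
  (cf : continuous f) (cg : continuous g)
  (hfg : (norm2Delta_sq Delta (fun x => (f x - g x)%R) < (eps ^+ 3 / 8)%R%:E)%E)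
  (hg : forall mu, Delta mu -> (mu (g @^-1` [set 0%R]) < (eps / 2)%R%:E)%E) :
  exists g' : X -> R, continuous g' /\
    (supnorm (fun x => (f x - g' x)%R) < eps%:E)%E /\
    (forall mu, Delta mu -> (mu (g' @^-1` [set 0%R]) < eps%:E)%E).
Proof.
set c := eps / 2.
have c0 : 0 < c by rewrite /c; lra.
set d := fun x => f x - g x.
have cd : continuous d by move=> x; exact: (cvgB (cf x) (cg x)).
set g' := fun x => f x - clip c (d x).
have cg' : continuous g'.
  move=> x; apply: (cvgB (cf x)).
  apply: (@continuous_comp _ _ _ d (clip c)); [exact: cd | exact: clip_cont].
exists g'; split; first exact: cg'.
split.
  apply: (@le_lt_trans _ _ c%:E); last by rewrite lte_fin /c; lra.
  apply: ge_ereal_sup => _ [x _ <-].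
  rewrite lee_fin /g'.
  have -> : f x - (f x - clip c (d x)) = clip c (d x) by ring.
  by apply: clip_le; exact: ltW.
move=> mu Dmu.
have md : measurable_fun (setT : set (borel_space X)) d := cont_mfun cd.
set A : set (borel_space X) := setT `&` [set x | (c%:E <= `|(d x)%:E|)%E].
have mdE : measurable_fun (setT : set (borel_space X)) (fun x => (d x)%:E).
  exact/measurable_EFinP.
have mA : measurable A.
  apply: emeasurable_fun_c_infty => //.
  by apply: measurableT_comp.
have mZ : measurable (g @^-1` [set 0] : set (borel_space X)).
  by rewrite -[X in measurable X]setTI; apply: (cont_mfun cg) => //; exact: measurable_set1.
have mZ' : measurable (g' @^-1` [set 0] : set (borel_space X)).
  by rewrite -[X in measurable X]setTI; apply: (cont_mfun cg') => //; exact: measurable_set1.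
have sub : g' @^-1` [set 0] `<=` g @^-1` [set 0] `|` A.
  move=> x /= gx0.
  have [h|h] := leP c `|d x|.
    by right; split => //=; rewrite lee_fin.
  left; move: gx0; rewrite /g' clip_id; last exact: ltW.
  by rewrite /d; move=> h0; lra.
have cheb : ((c%:E * c%:E) * mu A <= \int[mu]_(x in setT) (`|(d x)%:E| * `|(d x)%:E|))%E.
  apply: (@le_integral_comp_abse _ _ R mu setT measurableT (fun x => (d x)%:E) c (fun e => e * e)%E) => //.
  - by apply: emeasurable_funM.
  - by move=> r r0; exact: mule_ge0.
  - move=> x y; rewrite !inE /= !in_itv /= !andbT => x0 y0 xy; exact: lee_pmul.
have eqI : (\int[mu]_(x in setT) (`|(d x)%:E| * `|(d x)%:E|) = \int[mu]_x ((`|d x| ^+ 2)%:E))%E.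
  by apply: eq_integral => x _ /=; rewrite -EFinM expr2.
have hle : (\int[mu]_x ((`|d x| ^+ 2)%:E) <= norm2Delta_sq Delta d)%E.
  by apply: ereal_sup_ubound; exists mu.
have muA : (mu A < c%:E)%E.
  have mA1 := probability_le1 mu mA.
  have fA : mu A \is a fin_num.
    by rewrite ge0_fin_numE ?measure_ge0 // (le_lt_trans mA1) // ltry.
  have := le_lt_trans (le_trans cheb (eq_ind_r (fun z => (z <= _)%E) hle eqI)) hfg.
  rewrite -(fineK fA) -EFinM lte_fin => h.
  rewrite lte_fin.
  have e3 : eps ^+ 3 / 8 = c * c * c by rewrite /c; field.
  rewrite e3 in h.
  have cc : 0 < c * c by apply: mulr_gt0.
  nra.
apply: (@le_lt_trans _ _ (mu (g @^-1` [set 0] `|` A))).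
  by apply: le_measure => //; rewrite inE //; exact: measurableU.
apply: (le_lt_trans (measureU2 _ _ _)) => //.
have -> : eps = c + c by rewrite /c; lra.
rewrite EFinD; apply: lteD => //.
exact: hg.
Qed.
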